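(* Let $F=f+p$ where $f:\mathbb{R}^n\to\mathbb{R}$ is convex and continuously differentiable with Lipschitz continuous gradient and $p:\mathbb{R}^n\to\mathbb{R}$ is convex. Let $\sigma>0$ and for each $k\ge0$ let $H_k=\sigma\mathbf I-u_ku_k^t$ with $\|u_k\|^2<\sigma$. Let $\{y^k\}$ be an arbitrary sequence in $\mathbb{R}^n$, let $\{\alpha^k\}$ satisfy $\alpha^k\in(0,1)$ and $\sum_{k=0}^\infty\alpha^k=\infty$, and let $\lambda^0=1$. For each $k$ let $$M_{H_k}(x,y^k)=f(y^k)+\langle\nabla f(y^k),x-y^k\rangle+\tfrac12(x-y^k)^tH_k(x-y^k)+p(x),$$ $x^\ast_{H_k}(y^k)=\arg\min_xM_{H_k}(x,y^k)$, $g^k=H_k(y^k-x^\ast_{H_k}(y^k))$, and assume $F(x^\ast_{H_k}(y^k))\le M_{H_k}(x^\ast_{H_k}(y^k),y^k)$ for all $k$. Let $\phi^0:\mathbb{R}^n\to\mathbb{R}$ be any function and define $$\lambda^{k+1}=(1-\alpha^k)\lambda^k,\qquad \phi^{k+1}(x)=(1-\alpha^k)\phi^k(x)+\alpha^k\Big[F(x^\ast_{H_k}(y^k))+\langle g^k,x-y^k\rangle+\tfrac{1}{2\sigma}\|g^k\|^2\Big].$$ Then $(\{\phi^k\},\{\lambda^k\})$ is an estimate sequence of $F$.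
   Context: A pair of sequences $\{\phi^k(x)\}$ and $\{\lambda^k\}$ with $\lambda^k\ge0$ is called an estimate sequence of a function $F$ if $\lambda^k\to0$ and for every $x\in\mathbb{R}^n$ and all $k\ge0$, $\phi^k(x)\le(1-\lambda^k)F(x)+\lambda^k\phi^0(x)$. *)

(* Defs.v *)
(* Vectors of R^n are row vectors 'rV[R]_n. *)
From HB Require Import structures.
From mathcomp Require Import all_boot all_order all_algebra.
From mathcomp Require Import all_classical all_reals all_analysis.
Set Implicit Arguments. Unset Strict Implicit. Unset Printing Implicit Defensive.
Import Order.TTheory GRing.Theory Num.Theory.
Import numFieldNormedType.Exports.
Local Open Scope classical_set_scope.
Local Open Scope ring_scope.

Section Defs.
Variables (R : realType) (n : nat).

Definition dotv (u v : 'rV[R]_n) : R := \sum_(i < n) u 0 i * v 0 i.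

Definition sqnorm (v : 'rV[R]_n) : R := dotv v v.

Definition enorm (v : 'rV[R]_n) : R := Num.sqrt (sqnorm v).

Definition convex_fun (f : 'rV[R]_n -> R) : Prop :=
  forall (x y : 'rV[R]_n) (t : R), 0 <= t -> t <= 1 ->
    f (t *: x + (1 - t) *: y) <= t * f x + (1 - t) * f y.

Definition gradient (f : 'rV[R]_n -> R) (x : 'rV[R]_n) : 'rV[R]_n :=
  \row_(i < n) ('d f x (delta_mx 0 i : 'rV[R]_n)).

Definition quadf (H : 'M[R]_n) (d : 'rV[R]_n) : R := (d *m H *m d^T) 0 0.

Definition Hmat (sigma : R) (u : 'rV[R]_n) : 'M[R]_n :=
  sigma%:M - u^T *m u.

Definition model (f p : 'rV[R]_n -> R) (H : 'M[R]_n) (x y : 'rV[R]_n) : R :=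
  f y + dotv (gradient f y) (x - y) + 2^-1 * quadf H (x - y) + p x.

Fixpoint lam (alpha : nat -> R) (k : nat) : R :=
  match k with
  | O => 1
  | S k' => (1 - alpha k') * lam alpha k'
  end.

Fixpoint phiseq (phi0 : 'rV[R]_n -> R) (F : 'rV[R]_n -> R) (sigma : R)
  (alpha : nat -> R) (y xs g : nat -> 'rV[R]_n) (k : nat) (x : 'rV[R]_n) : R :=
  match k with
  | O => phi0 x
  | S k' => (1 - alpha k') * phiseq phi0 F sigma alpha y xs g k' x
            + alpha k' * (F (xs k') + dotv (g k') (x - y k')
                          + (2 * sigma)^-1 * sqnorm (g k'))
  end.

Definition estimate_sequence (F : 'rV[R]_n -> R)
  (phi : nat -> 'rV[R]_n -> R) (lambda : nat -> R) : Prop :=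
  (forall k, 0 <= lambda k) /\
  (lambda @ \oo --> (0 : R)) /\
  (forall (x : 'rV[R]_n) (k : nat),
      phi k x <= (1 - lambda k) * F x + lambda k * phi 0%N x).

End Defs.

(* Main.v *)
Set Warnings "-all".
Require Import Defs.
From HB Require Import structures.
From mathcomp Require Import all_boot all_order all_algebra.
From mathcomp Require Import all_classical all_reals all_analysis.
From mathcomp Require Import ring lra.
Import Order.TTheory GRing.Theory Num.Theory.
Import numFieldNormedType.Exports.
Local Open Scope classical_set_scope.
Local Open Scope ring_scope.

Lemma grad_dot (R : realType) (n : nat) (f : 'rV[R]_n -> R) y v :
  'd f y v = dotv (gradient f y) v.
Proof.
rewrite {1}(row_sum_delta v) linear_sum /dotv; apply: eq_bigr => i _.
by rewrite linearZ /= mxE mulrC.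
Qed.

Lemma grad_ineq (R : realType) (n : nat) (f : 'rV[R]_n -> R) x y :
  convex_fun f -> differentiable f y ->
  f y + dotv (gradient f y) (x - y) <= f x.
Proof.
move=> cf df; rewrite -grad_dot -deriveE //.
have dv := @diff_derivable _ _ _ f y (x - y) df.
rewrite -lerBrDl.
have sub : (0:R)^'+ `=>` (0:R)^'.
  apply: within_subset => z /= z0; by rewrite gt_eqF.
have := cvg_trans (cvg_app _ sub) dv.
move=> /cvgr_to_le; apply.
near=> h.
have h0 : 0 < h by near: h; exact: nbhs_right_gt.
have h1 : h < 1 by near: h; exact: nbhs_right_lt.
rewrite /= ler_pdivrMl // addrC.
have := cf x y h (ltW h0) (ltW h1).
rewrite scalerBr scalerBl scale1r.
have -> : h *: x + (y - h *: y) = h *: x - h *: y + y by rewrite addrCA addrC. 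
move=> H; rewrite mulrBr; lra.
Unshelve. all: by end_near. Qed.
Section Alg.
Variables (R : realType) (n : nat).
Implicit Types (a b c : 'rV[R]_n).

Lemma dotC a b : dotv a b = dotv b a.
Proof. by rewrite /dotv; apply: eq_bigr => i _; rewrite mulrC. Qed.
Lemma dotDr a b c : dotv a (b + c) = dotv a b + dotv a c.
Proof. by rewrite /dotv -big_split; apply: eq_bigr => i _; rewrite mxE mulrDr. Qed.
Lemma dotDl a b c : dotv (b + c) a = dotv b a + dotv c a.
Proof. by rewrite dotC dotDr !(dotC a). Qed.
Lemma dotZr t a b : dotv a (t *: b) = t * dotv a b.
Proof. by rewrite /dotv mulr_sumr; apply: eq_bigr => i _; rewrite mxE mulrCA. Qed.
Lemma dotZl t a b : dotv (t *: b) a = t * dotv b a.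
Proof. by rewrite dotC dotZr dotC. Qed.
Lemma dotNr a b : dotv a (- b) = - dotv a b.
Proof. by rewrite -scaleN1r dotZr mulN1r. Qed.
Lemma dotNl a b : dotv (- b) a = - dotv b a.
Proof. by rewrite dotC dotNr dotC. Qed.
Lemma dotBr a b c : dotv a (b - c) = dotv a b - dotv a c.
Proof. by rewrite dotDr dotNr. Qed.
Lemma dotBl a b c : dotv (b - c) a = dotv b a - dotv c a.
Proof. by rewrite dotDl dotNl. Qed.

Lemma dotvE a b : dotv a b = (a *m b^T) 0 0.
Proof. by rewrite /dotv mxE; apply: eq_bigr => i _; rewrite mxE. Qed.

Lemma mulH sigma u a :
  a *m Hmat sigma u = sigma *: a - dotv a u *: u.
Proof.
rewrite /Hmat mulmxBr mul_mx_scalar mulmxA [a *m u^T]mx11_scalar mul_scalar_mx.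
by rewrite -dotvE.
Qed.

Lemma quadfE H a : quadf H a = dotv (a *m H) a.
Proof. by rewrite /quadf dotvE. Qed.

Lemma Hsym sigma u a b :
  dotv (a *m Hmat sigma u) b = dotv (b *m Hmat sigma u) a.
Proof.
rewrite !mulH !dotBl !dotZl (dotC a b) (dotC u a) (dotC u b); ring.
Qed.
End Alg.

Lemma small_t (R : realType) (A B : R) :
  (forall t, 0 < t -> t <= 1 -> 0 <= t * A + t ^+ 2 * B) -> 0 <= A.
Proof.
move=> H; rewrite leNgt; apply/negP => A0.
case: (lerP B 0) => B0.
  by have := H 1 ltr01 (lexx _); rewrite mul1r expr1n mul1r; lra.
case: (lerP (- A / (2 * B)) 1) => t1.
  have t0 : 0 < - A / (2 * B) by rewrite divr_gt0 ?mulr_gt0; lra.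
  have := H _ t0 t1.
  have -> : (- A / (2 * B)) ^+ 2 * B = - A / (2 * B) * (- A / 2).
    by rewrite expr2 -mulrA; congr (_ * _); field; lra.
  rewrite -mulrDr pmulr_rge0 //; lra.
have := H 1 ltr01 (lexx _); rewrite mul1r expr1n mul1r.
move: t1; rewrite ltr_pdivlMr ?mulr_gt0 //; lra.
Qed.

Lemma key (R : realType) (n : nat) (f p : 'rV[R]_n -> R) sigma u y xs x :
  convex_fun f -> differentiable f y -> convex_fun p -> 0 < sigma ->
  sqnorm u < sigma ->
  (forall z, model f p (Hmat sigma u) xs y <= model f p (Hmat sigma u) z y) ->
  f xs + p xs <= model f p (Hmat sigma u) xs y ->
  f xs + p xs + dotv ((y - xs) *m Hmat sigma u) (x - y)
    + (2 * sigma)^-1 * sqnorm ((y - xs) *m Hmat sigma u) <= f x + p x.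
Proof.
move=> cf df cp s0 su hmin hmod.
set H := Hmat sigma u.
set G := gradient f y.
have zE : forall t : R, t *: x + (1 - t) *: xs - y = (xs - y) + t *: (x - xs).
  by move=> t; apply/rowP => i; rewrite !mxE; ring.
have gE : (y - xs) *m H = - ((xs - y) *m H) by rewrite -mulNmx opprB.
have xyE : x - y = (x - xs) + (xs - y) by rewrite addrA subrK.
have hf := @grad_ineq R n f x y cf df.
rewrite /model -/H -/G in hmin hmod.
move: zE gE xyE hf hmin hmod.
move: (x - xs) (xs - y) => e d0 zE gE xyE hf hmin hmod.
have A0 : 0 <= dotv G e + dotv (d0 *m H) e + p x - p xs.
  apply: (@small_t _ _ (2^-1 * quadf H e)) => t t0 t1.
  have hm := hmin (t *: x + (1 - t) *: xs).
  have hp := cp x xs t (ltW t0) t1.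
  rewrite zE !quadfE (mulmxDl d0) in hm.
  have hs : dotv (e *m H) d0 = dotv (d0 *m H) e by exact: Hsym.
  have sE : (t *: e) *m H = t *: (e *m H) by rewrite scalemxAl.
  rewrite sE !dotDl !dotDr !dotZl !dotZr hs in hm.
  rewrite quadfE.
  nra.
rewrite quadfE in hmod.
rewrite gE xyE !dotDr !dotNl.
rewrite -/G xyE !dotDr in hf.
rewrite /sqnorm dotNl dotNr opprK.
have Hs : (2 * sigma)^-1 * dotv (d0 *m H) (d0 *m H) <= 2^-1 * dotv (d0 *m H) d0.
  rewrite /H !mulH !dotBl !dotBr !dotZl !dotZr (@dotC R n u d0).
  set c := dotv d0 u.
  have sn : (sqnorm u) = dotv u u by [].
  rewrite -sn.
  set dd := dotv d0 d0.
  have -> : (2 * sigma)^-1 * (sigma * (sigma * dd) - sigma * (c * c) - (c * (sigma * c) - c * (c * sqnorm u)))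
    = 2^-1 * (sigma * dd - c * c) - 2^-1 * (c * c) * ((sigma - sqnorm u) / sigma).
    by field; lra.
  have : 0 <= 2^-1 * (c * c) * ((sigma - sqnorm u) / sigma).
    apply: mulr_ge0; first by apply: mulr_ge0; [lra | nra].
    by apply: divr_ge0; lra.
  lra.
lra.
Qed.

Lemma lam_ge0 (R : realType) (alpha : nat -> R) :
  (forall k, 0 < alpha k < 1) -> forall k, 0 <= lam alpha k.
Proof.
move=> ha; elim=> [|k IH] /=; first exact: ler01.
have /andP[_ a1] := ha k; apply: mulr_ge0 => //; lra.
Qed.

Lemma lam_exp (R : realType) (alpha : nat -> R) :
  (forall k, 0 < alpha k < 1) -> forall k, lam alpha k <= expR (- series alpha k).
Proof.
move=> ha; elim=> [|k IH] /=.
  by rewrite /series /= big_geq // oppr0 expR0.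
rewrite seriesSr opprD expRD mulrC.
apply: ler_pM => //; first exact: (@lam_ge0 R alpha ha).
  have /andP[_ a1] := ha k; lra.
by have := expR_ge1Dx (- alpha k); rewrite -addrC.
Qed.

Lemma lam_cvg (R : realType) (alpha : nat -> R) :
  (forall k, 0 < alpha k < 1) -> series alpha @ \oo --> +oo ->
  lam alpha @ \oo --> (0 : R).
Proof.
move=> ha hs.
have pos : \forall k \near \oo, 0 < series alpha k.
  by move/cvgryPgt : hs; apply.
apply: (@squeeze_cvgr _ _ _ _ (fun=> 0) (fun k => (series alpha k)^-1)).
- near=> k; apply/andP; split; first exact: (@lam_ge0 R alpha ha).
  rewrite /=.
  apply: le_trans; first exact: (@lam_exp R alpha ha k).
  have sp : 0 < series alpha k by near: k.
  rewrite expRN lef_pV2 ?posrE ?expR_gt0 //.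
  by have := expR_ge1Dx (series alpha k); lra.
- exact: cvg_cst.
- by apply/(gtr0_cvgV0 pos).
Unshelve. all: by end_near.
Qed.

Theorem lemma7 (R : realType) (n : nat) (f p : 'rV[R]_n -> R)
  (sigma : R) (u : nat -> 'rV[R]_n) (y : nat -> 'rV[R]_n)
  (alpha : nat -> R) (xs : nat -> 'rV[R]_n) (phi0 : 'rV[R]_n -> R) :
  convex_fun f ->
  (forall x : 'rV[R]_n, differentiable f x) ->
  continuous (gradient f) ->
  (exists L : R, forall x z : 'rV[R]_n,
      enorm (gradient f x - gradient f z) <= L * enorm (x - z)) ->
  convex_fun p ->
  0 < sigma ->
  (forall k, sqnorm (u k) < sigma) ->
  (forall k, 0 < alpha k < 1) ->
  series alpha @ \oo --> +oo ->
  (* xs k = x*_{H_k}(y^k), the minimizer of M_{H_k}(., y^k) *)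
  (forall k (x : 'rV[R]_n),
      model f p (Hmat sigma (u k)) (xs k) (y k)
        <= model f p (Hmat sigma (u k)) x (y k)) ->
  (forall k, f (xs k) + p (xs k)
      <= model f p (Hmat sigma (u k)) (xs k) (y k)) ->
  estimate_sequence (fun x => f x + p x)
    (phiseq phi0 (fun x => f x + p x) sigma alpha y xs
       (fun k => (y k - xs k) *m Hmat sigma (u k)))
    (lam alpha).
Proof.
move=> cf df _ _ cp s0 su ha hs hmin hmod.
split; first exact: (@lam_ge0 R alpha ha).
split; first exact: lam_cvg.
move=> x; elim=> [|k IH] /=; first lra.
have hk := @key R n f p sigma (u k) (y k) (xs k) x cf (df (y k)) cp s0 (su k) (hmin k) (hmod k).
have /andP[a0 a1] := ha k.
have a1' : 0 <= 1 - alpha k by lra.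
have := ler_wpM2l a1' IH.
move: hk; set B := f (xs k) + _ + _ + _.
set P := phiseq _ _ _ _ _ _ _ k x.
move=> hk h1.
have h2 : alpha k * B <= alpha k * (f x + p x) by rewrite ler_wpM2l //; lra.
rewrite /=.
simpl in h1. nra.
Qed.
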